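(* Let $(X_t)_{t\in Z^m}$ be a definable family of subsets of $R^n$ indexed by $Z^m$. Then $\{X_t:t\in Z^m\}$ is finite. More generally, if $X$ is an $R$-internal definable set and $Y$ is a $Z$-internal definable set (definable in $(Z,R)^{eq}$), then for any definable family $(X_t)_{t\in Y}$ of subsets of $X$, the set $\{X_t:t\in Y\}$ is finite.
   Context: Let $\mathfrak C$ be a monster model, $Z,R$ definable subsets of $\mathfrak C$ which are stably embedded (subsets of $Z^n$, resp. $R^n$, definable with parameters from $\mathfrak C$ are definable with parameters from $Z$, resp. $R$) and fully orthogonal (for all $m,n$, every definable subset of $Z^m\times R^n$ is a finite union of sets $U\times V$ with $U\subseteq Z^m$, $V\subseteq R^n$ definable). $(Z,R)^{eq}$ is the two-sorted structure $(Z,R)$ (no connection between the sorts) expanded by all imaginary sorts; ''definable'' means definable in $(Z,R)^{eq}$ with parameters. A definable set $X$ is $Z$-internal (resp. $R$-internal) if there is a definable surjection from $Z^k$ (resp. $R^k$) onto $X$ for some $k$. *)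

(* Defs.v *)
From mathcomp Require Import all_boot.
Set Implicit Arguments. Unset Strict Implicit. Unset Printing Implicit Defensive.

Record language := Language {
  func : Type; rel : Type;
  farity : func -> nat; rarity : rel -> nat }.

Inductive term (L : language) :=
| Var of nat
| App (f : func L) of ('I_(farity f) -> term L).

Inductive formula (L : language) :=
| FEq of term L & term L
| FRel (r : rel L) of ('I_(rarity r) -> term L)
| FNot of formula L
| FAnd of formula L & formula L
| FEx of nat & formula L.

Record structure (L : language) := Structure {
  carrier :> Type;
  finterp : forall f : func L, ('I_(farity f) -> carrier) -> carrier;
  rinterp : forall r : rel L, ('I_(rarity r) -> carrier) -> Prop }.

Definition upd (T : Type) (v : nat -> T) (i : nat) (a : T) : nat -> T :=
  fun j => if j == i then a else v j.

Fixpoint eval (L : language) (M : structure L) (v : nat -> M) (t : term L) : M :=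
  match t with
  | Var i => v i
  | App f args => @finterp L M f (fun j => eval v (args j))
  end.

Fixpoint sat (L : language) (M : structure L) (v : nat -> M) (phi : formula L)
  : Prop :=
  match phi with
  | FEq t1 t2 => eval v t1 = eval v t2
  | FRel r args => @rinterp L M r (fun j => eval v (args j))
  | FNot psi => ~ sat v psi
  | FAnd psi chi => sat v psi /\ sat v chi
  | FEx i psi => exists a : M, sat (upd v i a) psi
  end.

(* Variable convention: the assignment v places the point x : M^n in the
   variables 0..n-1 and the parameter tuple b : M^k in variables n..n+k-1. *)
Definition agree (T : Type) (n k : nat) (v : nat -> T)
  (x : 'I_n -> T) (b : 'I_k -> T) : Prop :=
  (forall i : 'I_n, v i = x i) /\ (forall j : 'I_k, v (n + j) = b j).

Definition mdef_over (L : language) (M : structure L) (P : M -> Prop)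
  (n : nat) (A : ('I_n -> M) -> Prop) : Prop :=
  exists (phi : formula L) (k : nat) (b : 'I_k -> M),
    (forall j, P (b j)) /\
    forall (v : nat -> M) (x : 'I_n -> M), agree v x b -> (A x <-> sat v phi).

Definition mdef (L : language) (M : structure L) (n : nat)
  (A : ('I_n -> M) -> Prop) : Prop := mdef_over (fun _ : M => True) A.

Definition tuple_in (T : Type) (P : T -> Prop) (n : nat) (x : 'I_n -> T) : Prop :=
  forall i, P (x i).

Definition stably_embedded (L : language) (M : structure L) (Z : M -> Prop) :=
  forall (n : nat) (A : ('I_n -> M) -> Prop),
    mdef A -> (forall x, A x -> tuple_in Z x) -> mdef_over Z A.

Definition pt (T : Type) (m n : nat) := (('I_m -> T) * ('I_n -> T))%type.

Definition joinv (T : Type) (m n : nat) (x : 'I_m -> T) (y : 'I_n -> T)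
  : 'I_(m + n) -> T :=
  fun i => match split i with inl j => x j | inr j => y j end.

Definition leftv (T : Type) (m n : nat) (w : 'I_(m + n) -> T) : 'I_m -> T :=
  fun j => w (lshift n j).
Definition rightv (T : Type) (m n : nat) (w : 'I_(m + n) -> T) : 'I_n -> T :=
  fun j => w (rshift m j).

Definition fully_orthogonal (L : language) (M : structure L) (Z R : M -> Prop) :=
  forall (m n : nat) (A : pt M m n -> Prop),
    mdef (fun w : 'I_(m + n) -> M => A (leftv w, rightv w)) ->
    (forall p, A p -> tuple_in Z p.1 /\ tuple_in R p.2) ->
    exists (N : nat) (U : 'I_N -> ('I_m -> M) -> Prop)
           (V : 'I_N -> ('I_n -> M) -> Prop),
      (forall i, mdef (U i) /\ forall x, U i x -> tuple_in Z x) /\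
      (forall i, mdef (V i) /\ forall y, V i y -> tuple_in R y) /\
      forall p : pt M m n, A p <-> exists i, U i p.1 /\ V i p.2.

(* The two-sorted structure (Z,R), with the induced structure on each sort  *)
(* and no connection between the sorts.  Atomic relations on the Z-sort are *)
(* all M-definable subsets of Z^k (similarly for R).                        *)

Inductive zrformula (T : Type) :=
| ZAtom (k : nat) of (('I_k -> T) -> Prop) & ('I_k -> nat)
| RAtom (k : nat) of (('I_k -> T) -> Prop) & ('I_k -> nat)
| ZRNot of zrformula T
| ZRAnd of zrformula T & zrformula T
| ZEx of nat & zrformula T
| REx of nat & zrformula T.

Fixpoint zrsat (T : Type) (Z R : T -> Prop) (vz vr : nat -> T)
  (phi : zrformula T) : Prop :=
  match phi with
  | ZAtom k A args => A (fun j => vz (args j))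
  | RAtom k A args => A (fun j => vr (args j))
  | ZRNot psi => ~ zrsat Z R vz vr psi
  | ZRAnd psi chi => zrsat Z R vz vr psi /\ zrsat Z R vz vr chi
  | ZEx i psi => exists a, Z a /\ zrsat Z R (upd vz i a) vr psi
  | REx i psi => exists a, R a /\ zrsat Z R vz (upd vr i a) psi
  end.

Fixpoint zr_ok (L : language) (M : structure L) (Z R : M -> Prop)
  (phi : zrformula M) : Prop :=
  match phi with
  | ZAtom k A _ => mdef A /\ (forall x, A x -> tuple_in Z x)
  | RAtom k A _ => mdef A /\ (forall x, A x -> tuple_in R x)
  | ZRNot psi => zr_ok Z R psi
  | ZRAnd psi chi => zr_ok Z R psi /\ zr_ok Z R chi
  | ZEx _ psi => zr_ok Z R psi
  | REx _ psi => zr_ok Z R psi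
  end.

Definition ptin (T : Type) (Z R : T -> Prop) (m n : nat) (p : pt T m n) : Prop :=
  tuple_in Z p.1 /\ tuple_in R p.2.

(* Z-variables 0..m-1 carry p.1, m..m+kz-1 the Z-parameters;
   R-variables 0..n-1 carry p.2, n..n+kr-1 the R-parameters. *)
Definition zrdef (L : language) (M : structure L) (Z R : M -> Prop)
  (m n : nat) (A : pt M m n -> Prop) : Prop :=
  exists phi : zrformula M, zr_ok Z R phi /\
  exists (kz : nat) (bz : 'I_kz -> M) (kr : nat) (br : 'I_kr -> M),
    tuple_in Z bz /\ tuple_in R br /\
    forall (p : pt M m n) (vz vr : nat -> M),
      ptin Z R p -> agree vz p.1 bz -> agree vr p.2 br ->
      (A p <-> zrsat Z R vz vr phi).

Definition zrdef2 (L : language) (M : structure L) (Z R : M -> Prop)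
  (m1 n1 m2 n2 : nat) (G : pt M m1 n1 -> pt M m2 n2 -> Prop) : Prop :=
  zrdef Z R (fun p : pt M (m1 + m2) (n1 + n2) =>
    G (leftv p.1, leftv p.2) (rightv p.1, rightv p.2)).

(* Definable sets of (Z,R)^eq: D/E with D <= Z^m x R^n definable and E a    *)
(* definable equivalence relation on D.  Elements are E-classes, handled    *)
(* through representatives.                                                 *)

Record eqset (T : Type) := EqSet {
  es_m : nat; es_n : nat;
  es_D : pt T es_m es_n -> Prop;
  es_E : pt T es_m es_n -> pt T es_m es_n -> Prop }.
Arguments es_D {T} e _ : rename.
Arguments es_E {T} e _ _ : rename.

Definition es_mem (T : Type) (Z R : T -> Prop) (S : eqset T)
  (p : pt T (es_m S) (es_n S)) : Prop := ptin Z R p /\ es_D S p.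
Arguments es_mem {T} Z R S p.

Definition is_eqset (L : language) (M : structure L) (Z R : M -> Prop)
  (S : eqset M) : Prop :=
  zrdef Z R (es_D S) /\ zrdef2 Z R (es_E S) /\
  (forall p, es_mem Z R S p -> es_E S p p) /\
  (forall p q, es_mem Z R S p -> es_mem Z R S q -> es_E S p q -> es_E S q p) /\
  (forall p q r, es_mem Z R S p -> es_mem Z R S q -> es_mem Z R S r ->
     es_E S p q -> es_E S q r -> es_E S p r).

(* G is (the graph, on representatives, of) a definable map from
   Z^a x R^b onto S. *)
Definition def_surj (L : language) (M : structure L) (Z R : M -> Prop)
  (a b : nat) (S : eqset M) (G : pt M a b -> pt M (es_m S) (es_n S) -> Prop)
  : Prop :=
  zrdef2 Z R G /\
  (forall r, ptin Z R r -> exists d, es_mem Z R S d /\ G r d) /\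
  (forall r d d', ptin Z R r -> es_mem Z R S d -> es_mem Z R S d' ->
     G r d -> (G r d' <-> es_E S d d')) /\
  (forall d, es_mem Z R S d -> exists r, ptin Z R r /\ G r d).

Definition R_internal (L : language) (M : structure L) (Z R : M -> Prop)
  (S : eqset M) : Prop :=
  exists k (G : pt M 0 k -> pt M (es_m S) (es_n S) -> Prop), def_surj Z R G.

Definition Z_internal (L : language) (M : structure L) (Z R : M -> Prop)
  (S : eqset M) : Prop :=
  exists k (G : pt M k 0 -> pt M (es_m S) (es_n S) -> Prop), def_surj Z R G.

(* W represents a definable subset of Y x X (a definable family (X_t)_{t in Y}
   of subsets of X, X_t = {[x] | W t x}): definable and invariant under the
   equivalence relations. *)
Definition def_family (L : language) (M : structure L) (Z R : M -> Prop)
  (Y X : eqset M) (W : pt M (es_m Y) (es_n Y) -> pt M (es_m X) (es_n X) -> Prop)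
  : Prop :=
  zrdef2 Z R W /\
  forall y y' x x', es_mem Z R Y y -> es_mem Z R Y y' ->
    es_mem Z R X x -> es_mem Z R X x' ->
    es_E Y y y' -> es_E X x x' -> W y x -> W y' x'.
Arguments def_family {L M} Z R Y X W.

(* Main.v *)
Require Import Defs.
From mathcomp Require Import all_boot.
From Stdlib Require ClassicalEpsilon FunctionalExtensionality PropExtensionality Classical_Prop.
Set Implicit Arguments. Unset Strict Implicit. Unset Printing Implicit Defensive.

Definition boxy (A B : Type) (P : A -> B -> Prop) :=
  exists (I : finType) (U : I -> A -> Prop) (V : I -> B -> Prop),
    forall a b, P a b <-> exists i, U i a /\ V i b.

Lemma boxy_ext A B (P Q : A -> B -> Prop) :
  (forall a b, P a b <-> Q a b) -> boxy P -> boxy Q.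
Proof.
move=> H [I [U [V HP]]]; exists I, U, V => a b.
have := H a b; have := HP a b; tauto.
Qed.

Lemma boxy_single A B (U : A -> Prop) (V : B -> Prop) :
  boxy (fun a b => U a /\ V b).
Proof.
exists (unit : finType), (fun _ => U), (fun _ => V) => a b; split.
  by move=> h; exists tt.
by case.
Qed.

Lemma boxy_and A B (P Q : A -> B -> Prop) :
  boxy P -> boxy Q -> boxy (fun a b => P a b /\ Q a b).
Proof.
move=> [I [U [V HP]]] [J [U' [V' HQ]]].
exists (I * J)%type, (fun ij a => U ij.1 a /\ U' ij.2 a),
  (fun ij b => V ij.1 b /\ V' ij.2 b) => a b.
rewrite (HP a b) (HQ a b); split.
  by move=> [[i [h1 h2]] [j [h3 h4]]]; exists (i, j).
by move=> [[i j] /= [[h1 h3] [h2 h4]]]; split; [exists i|exists j].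
Qed.

Lemma boxy_or A B (P Q : A -> B -> Prop) :
  boxy P -> boxy Q -> boxy (fun a b => P a b \/ Q a b).
Proof.
move=> [I [U [V HP]]] [J [U' [V' HQ]]].
exists (I + J)%type, (fun ij a => match ij with inl i => U i a | inr j => U' j a end),
  (fun ij b => match ij with inl i => V i b | inr j => V' j b end) => a b.
rewrite (HP a b) (HQ a b); split.
  by move=> [[i h]|[j h]]; [exists (inl i)|exists (inr j)].
by move=> [[i|j] h]; [left; exists i|right; exists j].
Qed.

Lemma boxy_not A B (P : A -> B -> Prop) :
  boxy P -> boxy (fun a b => ~ P a b).
Proof.
move=> [I [U [V HP]]].
exists {ffun I -> bool}, (fun (S : {ffun I -> bool}) a => forall i, S i -> ~ U i a),
  (fun (S : {ffun I -> bool}) b => forall i, ~~ S i -> ~ V i b) => a b.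
rewrite (HP a b); split.
  move=> h.
  exists [ffun i => if ClassicalEpsilon.excluded_middle_informative (U i a)
                    then false else true]; split => i; rewrite ffunE;
    case: ClassicalEpsilon.excluded_middle_informative => //= Hu Hv.
  by move=> Hv'; apply: h; exists i.
move=> [S [h1 h2]] [i [Hu Hv]].
case E: (S i); [exact: h1 i E Hu | by apply: (h2 i _ Hv); rewrite E].
Qed.

Lemma boxy_pull A B A' B' (f : A' -> A) (g : B' -> B) (P : A -> B -> Prop) :
  boxy P -> boxy (fun a b => P (f a) (g b)).
Proof.
move=> [I [U [V HP]]].
by exists I, (fun i a => U i (f a)), (fun i b => V i (g b)) => a b; apply: HP.
Qed.

Lemma boxy_exA A A' B (g : A -> A') (P : A -> B -> Prop) :
  boxy P -> boxy (fun a' b => exists a, g a = a' /\ P a b).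
Proof.
move=> [I [U [V HP]]].
exists I, (fun i a' => exists a, g a = a' /\ U i a), V => a' b; split.
  by move=> [a [<- /HP [i [h1 h2]]]]; exists i; split => //; exists a.
by move=> [i [[a [<- h1]] h2]]; exists a; split => //; apply/HP; exists i.
Qed.

Lemma boxy_exB A B B' (g : B -> B') (P : A -> B -> Prop) :
  boxy P -> boxy (fun a b' => exists b, g b = b' /\ P a b).
Proof.
move=> [I [U [V HP]]].
exists I, U, (fun i b' => exists b, g b = b' /\ V i b) => a b'; split.
  by move=> [b [<- /HP [i [h1 h2]]]]; exists i; split => //; exists b.
by move=> [i [h1 [b [<- h2]]]]; exists b; split => //; apply/HP; exists i.
Qed.

Lemma zr_boxy (T : Type) (Z R : T -> Prop) (phi : zrformula T) :
  boxy (fun vz vr => zrsat Z R vz vr phi).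
Proof.
elim: phi => [k A args|k A args|psi IH|psi IH chi IH'|i psi IH|i psi IH] /=.
- by eapply boxy_ext; last exact: (boxy_single (fun vz => A (fun j => vz (args j))) (fun _ => True)); move=> a b; tauto.
- by eapply boxy_ext; last exact: (boxy_single (fun _ => True) (fun vr => A (fun j => vr (args j)))); move=> a b; tauto.
- exact: boxy_not.
- exact: boxy_and.
- have H1 := boxy_pull (fun p : (nat -> T) * T => upd p.1 i p.2) id IH.
  have H2 := boxy_and (boxy_single (fun p : (nat -> T) * T => Z p.2) (fun _ : nat -> T => True)) H1.
  eapply boxy_ext; last exact: (boxy_exA (fun p : (nat -> T) * T => p.1) H2); move=> vz vr; split.
    by move=> [[v a] /= [-> [[h _] h']]]; exists a.
  by move=> [a [h h']]; exists (vz, a).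
- have H1 := boxy_pull id (fun p : (nat -> T) * T => upd p.1 i p.2) IH.
  have H2 := boxy_and (boxy_single (fun _ : nat -> T => True) (fun p : (nat -> T) * T => R p.2)) H1.
  eapply boxy_ext; last exact: (boxy_exB (fun p : (nat -> T) * T => p.1) H2); move=> vz vr; split.
    by move=> [[v a] /= [-> [[_ h] h']]]; exists a.
  by move=> [a [h h']]; exists (vr, a).
Qed.

Lemma fin_classes (A : Type) (K : finType) (P : A -> Prop) (F : A -> K -> Prop) :
  (forall a, P a -> exists k, F a k) ->
  exists N (ts : 'I_N -> A), (forall i, P (ts i)) /\
    forall a, P a -> exists i k, F a k /\ F (ts i) k.
Proof.
move=> Hk.
suff H : forall s : seq K, exists N (ts : 'I_N -> A), (forall i, P (ts i)) /\
    forall a k, P a -> F a k -> k \in s -> exists i, F (ts i) k.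
  have [N [ts [H1 H2]]] := H (enum K).
  exists N, ts; split => // a Pa; have [k Fk] := Hk a Pa.
  by have [i Fi] := H2 a k Pa Fk (mem_enum _ k); exists i, k.
elim=> [|k0 s [N [ts [H1 H2]]]].
  exists 0, (fun i : 'I_0 => False_rect A (Bool.diff_false_true (etrans (esym (ltn0 i)) (ltn_ord i)))).
  by split => [[]|].
case: (Classical_Prop.classic (exists a, P a /\ F a k0)) => [[a0 [Pa0 Fa0]]|Hno].
  exists N.+1, (fun i => if unlift ord0 i is Some j then ts j else a0); split.
    by move=> i; case: (unlift _ _).
  move=> a k Pa Fak; rewrite inE => /orP [/eqP ->|ks].
    by exists ord0; rewrite unlift_none.
  by have [i Fi] := H2 a k Pa Fak ks; exists (lift ord0 i); rewrite liftK.
exists N, ts; split => // a k Pa Fak; rewrite inE => /orP [/eqP Ek|ks].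
  by exfalso; apply: Hno; exists a; rewrite -Ek.
exact: H2 a k Pa Fak ks.
Qed.

Arguments joinv : simpl never.
Arguments leftv : simpl never.
Arguments rightv : simpl never.
Arguments tuple_in : simpl never.

Lemma leftv_joinv T m n (x : 'I_m -> T) (y : 'I_n -> T) : leftv (joinv x y) = x.
Proof.
apply: FunctionalExtensionality.functional_extensionality => j.
by rewrite /leftv /joinv (unsplitK (inl _ : 'I_m + 'I_n)).
Qed.

Lemma rightv_joinv T m n (x : 'I_m -> T) (y : 'I_n -> T) : rightv (joinv x y) = y.
Proof.
apply: FunctionalExtensionality.functional_extensionality => j.
by rewrite /rightv /joinv (unsplitK (inr _ : 'I_m + 'I_n)).
Qed.

Lemma tuple_joinv T (P : T -> Prop) m n (x : 'I_m -> T) (y : 'I_n -> T) :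
  tuple_in P (joinv x y) = (tuple_in P x /\ tuple_in P y).
Proof.
apply: PropExtensionality.propositional_extensionality; split.
  move=> h; split => j.
    by have := h (lshift n j); rewrite /joinv (unsplitK (inl _ : 'I_m + 'I_n)).
  by have := h (rshift m j); rewrite /joinv (unsplitK (inr _ : 'I_m + 'I_n)).
by move=> [hx hy] i; rewrite /joinv; case: split.
Qed.

Lemma tuple0 T (P : T -> Prop) (e : 'I_0 -> T) : tuple_in P e.
Proof. by case. Qed.

Lemma I0_eq T (e f : 'I_0 -> T) : e = f.
Proof. by apply: FunctionalExtensionality.functional_extensionality; case. Qed.

Definition ext T (d : T) k l (t : 'I_k -> T) (b : 'I_l -> T) : nat -> T :=
  fun j => if insub j is Some i then t i else
           if insub (j - k) is Some i then b i else d.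

Lemma agree_ext T (d : T) k l (t : 'I_k -> T) (b : 'I_l -> T) :
  agree (ext d t b) t b.
Proof.
split => i; rewrite /ext.
  by rewrite (valK i).
rewrite insubN; last by rewrite -leqNgt leq_addr.
by rewrite addKn (valK i).
Qed.

Lemma zrdef_boxy (L : language) (M : structure L) (d : M) (Z R : M -> Prop)
  m n (A : pt M m n -> Prop) :
  zrdef Z R A -> boxy (fun t x => tuple_in Z t /\ tuple_in R x /\ A (t, x)).
Proof.
move=> [phi [_ [kz [bz [kr [br [HZ [HR H]]]]]]]].
have B := boxy_and (boxy_single (@tuple_in M Z m) (@tuple_in M R n))
  (boxy_pull (fun t => ext d t bz) (fun x => ext d x br) (zr_boxy Z R phi)).
eapply boxy_ext; last exact: B.
move=> t x /=; split.
  move=> [[ht hx] hs].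
  have := H (t,x) (ext d t bz) (ext d x br) (conj ht hx) (agree_ext _ _ _) (agree_ext _ _ _).
  tauto.
move=> [ht [hx ha]].
have := H (t,x) (ext d t bz) (ext d x br) (conj ht hx) (agree_ext _ _ _) (agree_ext _ _ _).
tauto.
Qed.

Lemma key_bool (I : finType) (A : Type) (U : I -> A -> Prop) (t : A) :
  exists k : {ffun I -> bool}, forall i, k i = true <-> U i t.
Proof.
exists [ffun i => if ClassicalEpsilon.excluded_middle_informative (U i t) then true else false] => i.
by rewrite ffunE; case: ClassicalEpsilon.excluded_middle_informative => h; split.
Qed.

Lemma key_eq (I : finType) (A B : Type) (U : I -> A -> Prop) (V : I -> B -> Prop)
  (k : {ffun I -> bool}) t t' x :
  (forall i, k i = true <-> U i t) -> (forall i, k i = true <-> U i t') ->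
  (exists j, U j t /\ V j x) <-> (exists j, U j t' /\ V j x).
Proof.
move=> F F'; split => [[j [u v]]|[j [u v]]]; exists j; split => //.
  by apply/(F' j).1/(F j).2.
by apply/(F j).1/(F' j).2.
Qed.

Theorem lemma2p2 (L : language) (M : structure L) (M_inh : inhabited M)
  (Z R : M -> Prop)
  (Zdef : mdef (fun x : 'I_1 -> M => Z (x ord0)))
  (Rdef : mdef (fun x : 'I_1 -> M => R (x ord0)))
  (Zse : stably_embedded Z) (Rse : stably_embedded R)
  (ZRorth : fully_orthogonal Z R) :
  (* definable families (X_t)_{t in Z^m} of subsets of R^n *)
  (forall (m n : nat) (W : pt M m n -> Prop),
     zrdef Z R W ->
     exists (N : nat) (ts : 'I_N -> ('I_m -> M)),
       (forall i, tuple_in Z (ts i)) /\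
       forall t : 'I_m -> M, tuple_in Z t ->
         exists i, forall x : 'I_n -> M, tuple_in R x ->
           (W (t, x) <-> W (ts i, x)))
  /\
  (* general case: X R-internal, Y Z-internal, in (Z,R)^eq *)
  (forall (X Y : eqset M)
     (W : pt M (es_m Y) (es_n Y) -> pt M (es_m X) (es_n X) -> Prop),
     is_eqset Z R X -> is_eqset Z R Y ->
     R_internal Z R X -> Z_internal Z R Y ->
     def_family Z R Y X W ->
     exists (N : nat) (ys : 'I_N -> pt M (es_m Y) (es_n Y)),
       (forall i, es_mem Z R Y (ys i)) /\
       forall y, es_mem Z R Y y ->
         exists i, forall x, es_mem Z R X x -> (W y x <-> W (ys i) x)).
Proof.
case: M_inh => d; split.
  move=> m n W hW.
  have [I [U [V HB]]] := zrdef_boxy d hW.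
  have Hk : forall t, tuple_in Z t -> exists k : {ffun I -> bool}, forall i, k i = true <-> U i t.
    by move=> t _; apply: key_bool.
  have [N [ts [H1 H2]]] := fin_classes Hk.
  exists N, ts; split => // t ht.
  have [i [k [Fk Fk']]] := H2 t ht.
  exists i => x hx.
  have E := key_eq V x Fk Fk'.
  have h1 := HB t x; have h2 := HB (ts i) x; have := H1 i; tauto.
move=> X Y W [DXd _] [DYd _] [kX [GX [GXd [totX [funX surjX]]]]]
  [kY [GY [GYd [totY [funY surjY]]]]] [Wd inv].
pose AA := (((('I_kY -> M) * ('I_(es_m Y) -> M)) * ('I_(es_m X) -> M)) * ('I_0 -> M))%type.
pose BB := (((('I_kX -> M) * ('I_(es_n Y) -> M)) * ('I_(es_n X) -> M)) * ('I_0 -> M))%type.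
pose Conj := fun (rr : AA) (ss : BB) =>
  tuple_in Z rr.1.1.1 /\ tuple_in Z rr.1.1.2 /\ tuple_in Z rr.1.2 /\
  tuple_in R ss.1.1.1 /\ tuple_in R ss.1.1.2 /\ tuple_in R ss.1.2 /\
  es_D Y (rr.1.1.2, ss.1.1.2) /\ es_D X (rr.1.2, ss.1.2) /\
  GY (rr.1.1.1, ss.2) (rr.1.1.2, ss.1.1.2) /\ GX (rr.2, ss.1.1.1) (rr.1.2, ss.1.2) /\
  W (rr.1.1.2, ss.1.1.2) (rr.1.2, ss.1.2).
have BDY := boxy_pull (fun rr : AA => rr.1.1.2) (fun ss : BB => ss.1.1.2) (zrdef_boxy d DYd).
have BDX := boxy_pull (fun rr : AA => rr.1.2) (fun ss : BB => ss.1.2) (zrdef_boxy d DXd).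
have BGY := boxy_pull (fun rr : AA => joinv rr.1.1.1 rr.1.1.2) (fun ss : BB => joinv ss.2 ss.1.1.2) (zrdef_boxy d GYd).
have BGX := boxy_pull (fun rr : AA => joinv rr.2 rr.1.2) (fun ss : BB => joinv ss.1.1.1 ss.1.2) (zrdef_boxy d GXd).
have BW := boxy_pull (fun rr : AA => joinv rr.1.1.2 rr.1.2) (fun ss : BB => joinv ss.1.1.2 ss.1.2) (zrdef_boxy d Wd).
have BC : boxy Conj.
  eapply boxy_ext; last exact: (boxy_and BDY (boxy_and BDX (boxy_and BGY (boxy_and BGX BW)))).
  move=> [[[r yz] xz] f0] [[[s yr] xr] e0]; rewrite /Conj /=.
  rewrite !tuple_joinv !leftv_joinv !rightv_joinv.
  have := tuple0 Z f0; have := tuple0 R e0; tauto.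
have [I [U [V HB]]] := boxy_exB (fun ss : BB => ss.1.1.1) (boxy_exA (fun rr : AA => rr.1.1.1) BC).
have KEY : forall y x ry sx, es_mem Z R Y y -> es_mem Z R X x -> ptin Z R ry -> ptin Z R sx ->
    GY ry y -> GX sx x -> (W y x <-> exists i, U i ry.1 /\ V i sx.2).
  move=> y x ry sx hmY hmX hry hsx.
  move: (hmY) (hmX) (hry) (hsx).
  case: y hmY => yz yr hmY; case: x hmX => xz xr hmX; case: ry hry => r e0 hry; case: sx hsx => f0 s hsx.
  move=> [[hyz hyr] hDy] [[hxz hxr] hDx] [hr he] [hf hs] hG hG' /=.
  rewrite -HB; split.
    move=> hW; exists (s, yr, xr, e0); split => //; exists (r, yz, xz, f0); split => //.
  move=> [[[[s' yr'] xr'] e0'] /= [-> [[[[r' yz'] xz'] f0'] /= [->]]]].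
  move=> [_ [hyz' [hxz' [_ [hyr' [hxr' [hDy' [hDx' [hGY' [hGX' hW']]]]]]]]]].
  rewrite (I0_eq e0' e0) in hGY'; rewrite (I0_eq f0' f0) in hGX'.
  have mY' : es_mem Z R Y (yz', yr') := conj (conj hyz' hyr') hDy'.
  have mX' : es_mem Z R X (xz', xr') := conj (conj hxz' hxr') hDx'.
  have EY := (funY (r, e0) _ _ hry mY' hmY hGY').1 hG.
  have EX := (funX (f0, s) _ _ hsx mX' hmX hGX').1 hG'.
  exact: (inv _ _ _ _ mY' hmY mX' hmX EY EX hW').
have Hk : forall y, es_mem Z R Y y -> exists k : {ffun I -> bool},
    exists ry, ptin Z R ry /\ GY ry y /\ (forall i, k i = true <-> U i ry.1).
  move=> y hy; have [ry [hry hG]] := surjY y hy.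
  have [k Fk] := key_bool U ry.1.
  by exists k, ry.
have [N [ys [H1 H2]]] := fin_classes Hk.
exists N, ys; split => // y hy.
have [i [k [[ry [hry [hG Fk]]] [ry' [hry' [hG' Fk']]]]]] := H2 y hy.
exists i => x hx.
have [sx [hsx hGx]] := surjX x hx.
have e1 := KEY y x ry sx hy hx hry hsx hG hGx.
have e2 := KEY (ys i) x ry' sx (H1 i) hx hry' hsx hG' hGx.
have := key_eq V sx.2 Fk Fk'; tauto.
Qed.
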